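(* Fix $\mu>0$. For $r\in(0,1)$ consider the equation in the unknown $\kappa\in(0,2\pi)$ $$\frac{4}{\kappa}\tan\frac{\kappa}{4}=\Big(\frac{1-r^2/48}{1-7r^2/48}\Big)\Big[1-\frac{\kappa^2}{\mu}\Big].$$ For each such $r$ this equation has exactly one root $\kappa(r)\in(0,2\pi)$, and $$\lim_{r\to0^+}\frac{\kappa(r)}{r}=\sqrt{\frac{6}{1+48/\mu}} .$$ Consequently, writing $\kappa=kh$ and $r=h/H$, the corresponding wavenumber satisfies $kH\to\sqrt{6/(1+48/\mu)}$, and this limit equals $\pi/2$ if and only if $\frac1\mu=\frac{24/\pi^2-1}{48}$, i.e. $\mu=\frac{48}{24/\pi^2-1}\approx 33.53$.
   Context: This equation is the non-trivial factor of the characteristic equation for symmetric eigenmodes $e^{-Kk^2t}\phi(x)$ of a $2h$-periodic patch heat problem with proportional control of strength $\mu$ in two action regions, where $r=h/H$ is the ratio of patch half-width $h$ to macroscale half-width $H$; $\pi/2$ is the value of $kH$ for the slowest mode $\cos(\pi x/(2H))$ of the heat equation on $(-H,H)$ with Dirichlet conditions. *)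

(* Defs.v *)
From Stdlib Require Import Reals Lra.
Open Scope R_scope.

Definition patch_lhs (kappa : R) : R := (4 / kappa) * tan (kappa / 4).

Definition patch_rhs (mu r kappa : R) : R :=
  ((1 - r ^ 2 / 48) / (1 - 7 * r ^ 2 / 48)) * (1 - kappa ^ 2 / mu).

Definition is_root (mu r kappa : R) : Prop :=
  0 < kappa < 2 * PI /\ patch_lhs kappa = patch_rhs mu r kappa.

(* Main.v *)
Require Import Defs.
From Stdlib Require Import Reals Lra Psatz Ranalysis5.
From Coquelicot Require Import Coquelicot.
Open Scope R_scope.

Lemma PI_gt3 : 3 < PI.
Proof. pose proof PI2_3_2. lra. Qed.

Lemma sin_lo x : 0 <= x -> x <= PI -> x - x^3/6 + x^5/120 - x^7/5040 <= sin x.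
Proof. intros. destruct (sin_bound x 1 H H0) as [H1 _].
  unfold sin_approx, sin_term in H1. simpl in H1. lra. Qed.
Lemma sin_hi x : 0 <= x -> x <= PI -> sin x <= x - x^3/6 + x^5/120.
Proof. intros. destruct (sin_bound x 0 H H0) as [_ H1].
  unfold sin_approx, sin_term in H1. simpl in H1. lra. Qed.
Lemma cos_lo x : - PI/2 <= x -> x <= PI/2 -> 1 - x^2/2 <= cos x.
Proof. intros. destruct (cos_bound x 0 H H0) as [H1 _].
  unfold cos_approx, cos_term in H1. simpl in H1. lra. Qed.
Lemma cos_hi x : - PI/2 <= x -> x <= PI/2 -> cos x <= 1 - x^2/2 + x^4/24.
Proof. intros. destruct (cos_bound x 0 H H0) as [_ H1].
  unfold cos_approx, cos_term in H1. simpl in H1. lra. Qed.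

Lemma tan_lo x : 0 < x < PI/2 -> x + x^3/3 <= tan x.
Proof. intros [H0 H1].
  assert (Hc : 0 < cos x) by (apply cos_gt_0; lra).
  pose proof PI_4 as P4.
  pose proof (sin_lo x ltac:(lra) ltac:(lra)).
  pose proof (cos_hi x ltac:(lra) ltac:(lra)).
  unfold tan. apply (Rmult_le_reg_r (cos x)); auto.
  unfold Rdiv; rewrite Rmult_assoc, Rinv_l by lra; rewrite Rmult_1_r.
  assert (Hp : 0 <= x + x^3/3) by (pose proof (pow_le x 3); lra).
  assert ((x + x^3/3) * cos x <= (x + x^3/3) * (1 - x^2/2 + x^4/24))
    by (apply Rmult_le_compat_l; lra).
  assert (x<2) by lra.
  assert (0 <= x^5 * (2/15 - x^2*(1/72 + 1/5040))).
  { apply Rmult_le_pos. apply pow_le; lra. nra. }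
  nra.
Qed.

Lemma tan_hi x : 0 < x <= 1 -> tan x <= x + x^3/3 + x^5.
Proof. intros [H0 H1].
  pose proof PI2_3_2.
  assert (Hc : 0 < cos x) by (apply cos_gt_0; lra).
  pose proof (sin_hi x ltac:(lra) ltac:(lra)).
  pose proof (cos_lo x ltac:(lra) ltac:(lra)).
  unfold tan. apply (Rmult_le_reg_r (cos x)); auto.
  unfold Rdiv; rewrite Rmult_assoc, Rinv_l by lra; rewrite Rmult_1_r.
  assert (Hp : 0 <= x + x^3/3 + x^5) by (pose proof (pow_le x 3); pose proof (pow_le x 5); lra).
  assert ((x + x^3/3 + x^5) * (1 - x^2/2) <= (x + x^3/3 + x^5) * cos x)
    by (apply Rmult_le_compat_l; lra).
  assert (0 <= x^5 * ((1 - 1/6 - 1/120) - x^2/2)).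
  { apply Rmult_le_pos. apply pow_le; lra. nra. }
  nra.
Qed.

Lemma h_incr x y : 0 < x -> x < y -> y < PI/2 -> tan x / x < tan y / y.
Proof.
  intros Hx Hxy Hy.
  apply (incr_function (fun t => tan t / t) (Finite 0) (Finite (PI/2))
    (fun t => ((tan t ^ 2 + 1) * t - tan t * 1) / t ^ 2)); try (simpl; lra).
  - intros t H0 H1; simpl in H0, H1. apply is_derive_div.
    + apply is_derive_tan. assert (0 < cos t) by (apply cos_gt_0; lra). lra.
    + exact (is_derive_id (K:=R_AbsRing) t).
    + lra.
  - intros t H0 H1; simpl in H0, H1.
    assert (Hc : 0 < cos t) by (apply cos_gt_0; lra).
    apply Rdiv_lt_0_compat; [|apply pow_lt; lra].
    assert (Hs : sin (2*t) < 2*t) by (apply sin_lt_x; lra).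
    rewrite sin_2a in Hs.
    pose proof (sin2_cos2 t) as Hsc. unfold Rsqr in Hsc.
    unfold tan.
    replace ((sin t / cos t) ^ 2 + 1) with (/ (cos t)^2).
    2:{ assert (E: (sin t / cos t)^2 + 1 = (sin t * sin t + cos t * cos t)/cos t^2) by (field; lra). rewrite Hsc in E. rewrite E. field. lra. }
    apply (Rmult_lt_reg_r (cos t ^ 2)); [apply pow_lt; lra|].
    rewrite Rmult_0_l.
    replace ((/ cos t ^ 2 * t - sin t / cos t * 1) * cos t ^ 2) with (t - sin t * cos t)
      by (field; lra).
    lra.
Qed.

Lemma lhs_eq k : k <> 0 -> patch_lhs k = tan (k/4) / (k/4).
Proof. intros. unfold patch_lhs. field. auto. Qed.

Lemma lhs_incr k1 k2 : 0 < k1 -> k1 < k2 -> k2 < 2*PI -> patch_lhs k1 < patch_lhs k2.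
Proof. intros. rewrite !lhs_eq by lra. apply h_incr; lra. Qed.

Lemma lhs_lo k : 0 < k < 2*PI -> 1 + k^2/48 <= patch_lhs k.
Proof. intros. rewrite lhs_eq by lra.
  pose proof (tan_lo (k/4) ltac:(lra)).
  apply (Rmult_le_reg_r (k/4)); [lra|].
  unfold Rdiv at 3. rewrite Rmult_assoc, Rinv_l by lra. lra. Qed.

Lemma lhs_hi k : 0 < k <= 4 -> patch_lhs k <= 1 + k^2/48 + k^4/256.
Proof. intros. rewrite lhs_eq by lra.
  pose proof (tan_hi (k/4) ltac:(lra)).
  apply (Rmult_le_reg_r (k/4)); [lra|].
  unfold Rdiv at 1. rewrite Rmult_assoc, Rinv_l by lra. lra. Qed.

Lemma c_facts r : 0 < r < 1 ->
  let c := (1 - r^2/48)/(1 - 7*r^2/48) in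
  1 < c /\ c <= 48/41 /\ c * (1 - 7*r^2/48) = 1 - r^2/48.
Proof. intros Hr c.
  assert (Hd : 41/48 < 1 - 7*r^2/48 <= 1) by nra.
  assert (E : c * (1 - 7*r^2/48) = 1 - r^2/48) by (unfold c; field; lra).
  split; [|split]; [nra|nra|exact E].
Qed.

Lemma rhs_eq mu r k : patch_rhs mu r k = ((1 - r^2/48)/(1 - 7*r^2/48)) * (1 - k^2/mu).
Proof. reflexivity. Qed.

Lemma part1 mu r : 0 < mu -> 0 < r < 1 -> exists! kappa, is_root mu r kappa.
Proof.
  intros Hmu Hr.
  destruct (c_facts r Hr) as [Hc1 [Hc2 _]].
  set (c := (1 - r^2/48)/(1 - 7*r^2/48)) in *.
  pose proof PI_gt3 as P3.
  assert (Hcm : 0 < c/mu) by (apply Rdiv_lt_0_compat; lra).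
  set (M := 1/48 + 1/256 + c/mu).
  set (t0 := Rmin 1 ((c-1)/(2*M))).
  assert (Ht0 : 0 < t0 <= 1 /\ t0 * M <= (c-1)/2).
  { unfold t0. assert (0 < M) by (unfold M; lra).
    assert (0 < (c-1)/(2*M)) by (apply Rdiv_lt_0_compat; lra).
    split. split. apply Rmin_glb_lt; lra. apply Rmin_l.
    apply Rle_trans with ((c-1)/(2*M) * M).
    apply Rmult_le_compat_r; [lra|apply Rmin_r].
    right; field; lra. }
  set (a := sqrt t0).
  assert (Ha2 : a * a = t0) by (apply sqrt_sqrt; lra).
  assert (Ha : 0 < a <= 1).
  { split. apply sqrt_lt_R0; lra. rewrite <- sqrt_1. apply sqrt_le_1_alt. lra. }
  set (F := fun k => patch_lhs k - patch_rhs mu r k).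
  assert (Fa : F a < 0).
  { unfold F. rewrite rhs_eq. fold c.
    pose proof (lhs_hi a ltac:(lra)).
    assert (E1 : a^2 = t0) by (simpl; lra).
    assert (E2 : a^4 = t0*t0) by (simpl; nra).
    rewrite E1, E2 in H.
    assert (c * (1 - t0/mu) = c - t0 * (c/mu)) by (field; lra).
    assert (t0 * t0 <= t0) by nra.
    unfold M in Ht0. nra. }
  assert (F3 : 0 < F 3).
  { unfold F. rewrite rhs_eq. fold c.
    pose proof (lhs_lo 3 ltac:(lra)).
    assert (0 < 3^2/mu) by (apply Rdiv_lt_0_compat; lra).
    nra. }
  assert (Hcont : forall t, a <= t <= 3 -> continuity_pt F t).
  { intros t Ht. apply continuity_pt_filterlim.
    apply (ex_derive_continuous (K:=R_AbsRing) (V:=R_NormedModule)).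
    unfold F, patch_lhs, patch_rhs. auto_derive.
    split; [lra|split; [|exact I]].
    eexists. apply is_derive_tan.
    assert (0 < cos (t * /4)) by (apply cos_gt_0; lra). lra. }
  destruct (IVT_interv F a 3 Hcont ltac:(lra) Fa F3) as [z [Hz Fz]].
  exists z. split.
  - split; [lra|]. unfold F in Fz. lra.
  - intros y [Hy Ey].
    assert (Ez : patch_lhs z = patch_rhs mu r z) by (unfold F in Fz; lra).
    assert (Hz' : 0 < z < 2*PI) by lra.
    rewrite rhs_eq in Ey, Ez. fold c in Ey, Ez.
    destruct (Rtotal_order z y) as [Hlt|[Heq|Hgt]]; auto.
    + pose proof (lhs_incr z y ltac:(lra) Hlt ltac:(lra)).
      assert (z^2/mu < y^2/mu) by (apply Rmult_lt_compat_r; [apply Rinv_0_lt_compat; lra|nra]).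
      nra.
    + pose proof (lhs_incr y z ltac:(lra) Hgt ltac:(lra)).
      assert (y^2/mu < z^2/mu) by (apply Rmult_lt_compat_r; [apply Rinv_0_lt_compat; lra|nra]).
      nra.
Qed.

Lemma core mu r k : 0 < mu -> 0 < r < 1 -> is_root mu r k ->
  Rabs (k/r - sqrt (6 / (1 + 48/mu))) <=
  r^2 * ((1 + 2/mu) / ((1/48 + /mu) * sqrt (6 / (1 + 48/mu)))).
Proof.
  intros Hmu Hr [Hk Eq].
  destruct (c_facts r Hr) as [Hc1 [Hc2 Ec]].
  rewrite rhs_eq in Eq.
  set (c := (1 - r^2/48)/(1 - 7*r^2/48)) in *.
  set (m := / mu).
  assert (Hm : 0 < m) by (apply Rinv_0_lt_compat; lra).
  assert (Em : forall x, x / mu = x * m) by reflexivity.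
  rewrite Em in Eq.
  set (D := 1/48 + m).
  set (L := sqrt (6 / (1 + 48/mu))).
  assert (HD : 0 < D) by (unfold D; lra).
  assert (HL2 : L * L = 6 / (1 + 48/mu)).
  { apply sqrt_sqrt. apply Rlt_le, Rdiv_lt_0_compat; [lra|]. rewrite Em. nra. }
  assert (HLD : L * L * D = 1/8).
  { rewrite HL2. unfold D, m. field. split; [lra|]. unfold Rdiv. 
    assert (0 < 48 * / mu) by (apply Rmult_lt_0_compat; [lra| apply Rinv_0_lt_compat; lra]). lra. }
  assert (HL : 0 < L).
  { unfold L. apply sqrt_lt_R0. apply Rdiv_lt_0_compat; [lra|]. rewrite Em. nra. }
  set (q := k / r).
  assert (Hkq : k = q * r) by (unfold q; field; lra).
  assert (Hq : 0 < q) by (unfold q; apply Rdiv_lt_0_compat; lra).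
  assert (Ec1 : c - 1 = r^2 * (7*c - 1)/48) by lra.
  pose proof (lhs_lo k Hk) as Hlo.
  rewrite Hkq in Hlo, Eq.
  assert (Hr2 : 0 < r^2) by nra.
  assert (Up : q^2 * (1/48 + c*m) <= (7*c-1)/48).
  { apply (Rmult_le_reg_r (r^2)); auto.
    replace ((q * r)^2) with (q^2 * r^2) in * by ring. nra. }
  assert (Hq2 : q^2 < 9).
  { assert (0 <= q^2 * (c*m)) by (apply Rmult_le_pos; nra). nra. }
  assert (Hk3 : q * r < 3) by nra.
  pose proof (lhs_hi (q*r) ltac:(nra)) as Hhi.
  assert (Lo : (7*c-1)/48 <= q^2 * (1/48 + c*m) + q^4 * r^2 / 256).
  { apply (Rmult_le_reg_r (r^2)); auto.
    replace ((q * r)^2) with (q^2 * r^2) in * by ring.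
    replace ((q * r)^4) with (q^4 * r^4) in * by ring. nra. }
  assert (Hc1' : c - 1 <= r^2 / 6) by nra.
  assert (Bnd : Rabs (q^2 * D - 1/8) <= r^2 * (1 + 2*m)).
  { unfold D.
    assert (Hq4 : q^4 <= 81) by nra.
    assert (T1 : q^4 * r^2 / 256 <= 81 * r^2 / 256) by nra.
    assert (T2 : q^2 * (c-1) * m <= 9 * (r^2/6) * m).
    { apply Rmult_le_compat_r; [lra|]. apply Rmult_le_compat; nra. }
    apply Rabs_le. split; nra. }
  assert (Bnd2 : Rabs (q - L) * (L * D) <= r^2 * (1 + 2*m)).
  { apply Rle_trans with (2 := Bnd).
    replace (q^2 * D - 1/8) with ((q - L) * ((q + L) * D)) by (rewrite <- HLD; ring).
    rewrite Rabs_mult. apply Rmult_le_compat_l; [apply Rabs_pos|].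
    rewrite Rabs_right by nra. nra. }
  replace (2 / mu) with (2 * m) by reflexivity.
  fold D. fold L.
  apply (Rmult_le_reg_r (L*D)); [nra|].
  replace (r ^ 2 * ((1 + 2 * m) / (D * L)) * (L * D)) with (r^2 * (1 + 2*m)) by (field; lra).
  exact Bnd2.
Qed.

Theorem mainTheorem4 (mu : R) (hmu : 0 < mu) :
  (forall r : R, 0 < r < 1 -> exists! kappa : R, is_root mu r kappa) /\
  (forall kappa : R -> R,
     (forall r : R, 0 < r < 1 -> is_root mu r (kappa r)) ->
     limit1_in (fun r => kappa r / r) (fun r => 0 < r < 1)
               (sqrt (6 / (1 + 48 / mu))) 0) /\
  (sqrt (6 / (1 + 48 / mu)) = PI / 2 <-> / mu = (24 / PI ^ 2 - 1) / 48) /\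
  (/ mu = (24 / PI ^ 2 - 1) / 48 <-> mu = 48 / (24 / PI ^ 2 - 1)).
Proof.
  assert (Hm : 0 < / mu) by (apply Rinv_0_lt_compat; lra).
  assert (H48 : 0 < 1 + 48 / mu) by (unfold Rdiv; nra).
  assert (HL : 0 < sqrt (6 / (1 + 48 / mu))) by (apply sqrt_lt_R0, Rdiv_lt_0_compat; lra).
  pose proof PI_gt3 as P3. pose proof PI_4 as P4.
  split; [|split; [|split]].
  - intros r Hr. apply part1; auto.
  - intros kappa Hk. unfold limit1_in, limit_in. intros eps Heps.
    set (K := (1 + 2/mu) / ((1/48 + /mu) * sqrt (6 / (1 + 48/mu)))).
    assert (HK : 0 < K).
    { unfold K. apply Rdiv_lt_0_compat. unfold Rdiv; nra. apply Rmult_lt_0_compat; lra. }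
    exists (Rmin 1 (eps / K)). split.
    + apply Rmin_glb_lt; [lra|]. apply Rdiv_lt_0_compat; lra.
    + intros x [Hx Hd]. simpl in *. unfold R_dist in *.
      rewrite Rminus_0_r, Rabs_right in Hd by lra.
      pose proof (core mu x (kappa x) hmu Hx (Hk x Hx)) as Hc. fold K in Hc.
      assert (x < eps / K) by (apply Rlt_le_trans with (1 := Hd); apply Rmin_r).
      assert (x * K < eps).
      { apply (Rmult_lt_compat_r K) in H; auto. unfold Rdiv in H.
        rewrite Rmult_assoc, Rinv_l in H by lra. lra. }
      assert (x^2 * K <= x * K) by (apply Rmult_le_compat_r; nra).
      lra.
  - assert (HP : 0 < PI^2) by nra.
    split.
    + intro E. assert (E2 : 6 / (1 + 48/mu) = PI^2/4).
      { pose proof (sqrt_sqrt (6 / (1 + 48/mu))) as S.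
        rewrite E in S. rewrite <- S. field. apply Rlt_le, Rdiv_lt_0_compat; lra. }
      assert (E3 : 1 + 48/mu = 24 / PI^2).
      { assert (E4 : 6 = PI^2/4 * (1+48/mu)) by (rewrite <- E2; field; lra).
        apply (Rmult_eq_reg_r (PI^2)); [|lra].
        replace (24 / PI^2 * PI^2) with 24 by (field; lra). lra. }
      unfold Rdiv in E3 |- *. lra.
    + intro E. assert (E3 : 1 + 48/mu = 24 / PI^2) by (unfold Rdiv in *; lra).
      rewrite E3. replace (6 / (24 / PI^2)) with ((PI/2) * (PI/2)) by (field; lra).
      apply sqrt_square. lra.
  - assert (Ha : 0 < 24 / PI^2 - 1).
    { assert (PI^2 < 24) by nra.
      apply Rlt_Rminus. apply (Rmult_lt_reg_r (PI^2)); [nra|].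
      unfold Rdiv. rewrite Rmult_assoc, Rinv_l by nra. lra. }
    split.
    + intro E. rewrite <- (Rinv_inv mu), E. field. assert (PI^2 < 24) by nra. split; nra.
    + intro E. rewrite E. field. assert (PI^2 < 24) by nra. split; nra.
Qed.
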